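(* Let $f(\mathbf z,\bar{\mathbf z})$ be a convenient mixed function of $n$ variables. (1) If $f$ is of polar positive weighted homogeneous face type, then for every weight vector $P$, the face function $f_P$ is a polar weighted homogeneous polynomial. (2) If $f$ is of strongly polar positive weighted homogeneous face type, then for every weight vector $P$, the face function $f_P$ is a strongly polar positive weighted homogeneous polynomial (with respect to the weight $P$).
   Context: A mixed function is a convergent series $f(\mathbf z,\bar{\mathbf z})=\sum_{\nu,\mu}c_{\nu,\mu}\mathbf z^\nu\bar{\mathbf z}^\mu$, $\nu,\mu\in\mathbb Z_{\ge0}^n$. Its Newton polyhedron $\Gamma_+(f)$ is the convex hull of $\bigcup_{c_{\nu,\mu}\ne0}\big((\nu+\mu)+\mathbb R_{\ge0}^n\big)$, and $\Gamma(f)$ is the union of its compact faces. $f$ is convenient if $\Gamma(f)$ meets every coordinate axis. A weight vector is $P=(p_1,\dots,p_n)$ with positive integers $p_j$; $d(P;f)=\min\{\sum_j p_j\xi_j:\xi\in\Gamma_+(f)\}$, $\Delta(P)=\{\xi\in\Gamma_+(f):\sum_jp_j\xi_j=d(P;f)\}$, and the face function is $f_P=\sum_{\nu+\mu\in\Delta(P)}c_{\nu,\mu}\mathbf z^\nu\bar{\mathbf z}^\mu$. A mixed polynomial $h$ is polar weighted homogeneous if there exist positive integer vectors $Q$ (radial weight) and $P'$ (polar weight) and non-zero integers $m_r,m_p$ with $\sum_j q_j(\nu_j+\mu_j)=m_r$, $\sum_jp'_j(\nu_j-\mu_j)=m_p$ for all monomials of $h$; $m_p$ is its polar degree. It is strongly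 polar positive weighted homogeneous (with weight $P$) if this holds with $Q=P'=P$ and $m_p>0$. $f$ is of polar positive weighted homogeneous face type if for every $P$ with $\dim\Delta(P)=n-1$, $f_P$ is polar weighted homogeneous for some polar weight $P'$ with positive polar degree; it is of strongly polar positive weighted homogeneous face type if for every $P$ with $\dim\Delta(P)=n-1$, $f_P$ is strongly polar positive weighted homogeneous with weight $P$ itself. *)

(* Defs.v *)
From HB Require Import structures.
From mathcomp Require Import all_boot all_order all_algebra.
From mathcomp Require Import all_classical all_reals all_analysis.
Set Implicit Arguments. Unset Strict Implicit. Unset Printing Implicit Defensive.
Import Order.TTheory GRing.Theory Num.Theory.
Import numFieldNormedType.Exports.
Local Open Scope classical_set_scope.
Local Open Scope ring_scope.

Definition mindex (n : nat) := 'I_n -> nat.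

(* A mixed function f(z, zbar) = sum c_{nu,mu} z^nu zbar^mu is given by its
   coefficient family c : (nu, mu) |-> c_{nu,mu}. *)
Definition mcoef (C : Type) (n : nat) := mindex n -> mindex n -> C.

Section Defs.
Variable C : numClosedFieldType.
Variable R : realType.
Variable n : nat.

(* convergence of the series in some polydisc: Cauchy-type bound *)
Definition mconvergent (c : mcoef C n) : Prop :=
  exists r M : C, 0 < r /\
    forall nu mu, `|c nu mu| * r ^+ (\sum_(j < n) (nu j + mu j))%N <= M.

Definition mpolynomial (c : mcoef C n) : Prop :=
  finite_set [set p : mindex n * mindex n | c p.1 p.2 != 0].

Definition mpt (nu mu : mindex n) : 'rV[R]_n := \row_j ((nu j + mu j)%N)%:R.

Definition dotr (a x : 'rV[R]_n) : R := \sum_(j < n) a 0 j * x 0 j.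

Definition weight (P : 'I_n -> nat) : Prop := forall j, (0 < P j)%N.

Definition wvec (P : 'I_n -> nat) : 'rV[R]_n := \row_j (P j)%:R.

Definition orthants (c : mcoef C n) : set 'rV[R]_n :=
  [set y | exists nu mu, c nu mu != 0 /\ forall j, mpt nu mu 0 j <= y 0 j].

Definition convex_hull (S : set 'rV[R]_n) : set 'rV[R]_n :=
  [set x | exists (k : nat) (y : 'I_k -> 'rV[R]_n) (l : 'I_k -> R),
     (forall i, S (y i)) /\ (forall i, 0 <= l i) /\ \sum_(i < k) l i = 1 /\
     x = \sum_(i < k) l i *: y i].

Definition newton_poly (c : mcoef C n) : set 'rV[R]_n :=
  convex_hull (orthants c).

Definition is_face (c : mcoef C n) (F : set 'rV[R]_n) : Prop :=
  exists (a : 'rV[R]_n) (b : R),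
    (forall eta, newton_poly c eta -> b <= dotr a eta) /\
    F = [set xi | newton_poly c xi /\ dotr a xi = b].

Definition newton_boundary (c : mcoef C n) : set 'rV[R]_n :=
  [set xi | exists F, is_face c F /\ compact F /\ F xi].

Definition coord_axis (j : 'I_n) : set 'rV[R]_n :=
  [set xi | forall i, i != j -> xi 0 i = 0].

Definition convenient (c : mcoef C n) : Prop :=
  forall j, exists xi, newton_boundary c xi /\ coord_axis j xi.

Definition Delta (c : mcoef C n) (P : 'I_n -> nat) : set 'rV[R]_n :=
  [set xi | newton_poly c xi /\
     forall eta, newton_poly c eta -> dotr (wvec P) xi <= dotr (wvec P) eta].

(* affine dimension of S is at least k: S contains k+1 affinely independent
   points x0, x0 + X_1, ..., x0 + X_k *)
Definition affdim_ge (S : set 'rV[R]_n) (k : nat) : Prop :=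
  exists (x0 : 'rV[R]_n) (X : 'M[R]_(k, n)),
    S x0 /\ (forall i, S (x0 + row i X)) /\ \rank X = k.

Definition affdim_eq (S : set 'rV[R]_n) (k : nat) : Prop :=
  affdim_ge S k /\ ~ affdim_ge S k.+1.

Definition face_fun (c : mcoef C n) (P : 'I_n -> nat) : mcoef C n :=
  fun nu mu => if `[< Delta c P (mpt nu mu) >] then c nu mu else 0.

End Defs.

Arguments mpt {R n}.
Arguments orthants {C} R {n}.
Arguments newton_poly {C} R {n}.
Arguments is_face {C} R {n}.
Arguments newton_boundary {C} R {n}.
Arguments convenient {C} R {n}.
Arguments Delta {C} R {n}.
Arguments face_fun {C} R {n}.

Section Homog.
Variable C : numClosedFieldType.
Variable n : nat.

(* polar weighted homogeneous (radial weight Q, polar weight P',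
   radial degree mr, polar degree mp, both nonzero integers) *)
Definition polar_wh_with (h : mcoef C n) (Q P' : 'I_n -> nat) (mr mp : int)
  : Prop :=
  (forall j, (0 < Q j)%N) /\ (forall j, (0 < P' j)%N) /\
  mr != 0 /\ mp != 0 /\
  forall nu mu, h nu mu != 0 ->
    (\sum_(j < n) (Q j)%:Z * ((nu j)%:Z + (mu j)%:Z) = mr) /\
    (\sum_(j < n) (P' j)%:Z * ((nu j)%:Z - (mu j)%:Z) = mp).

Definition polar_wh (h : mcoef C n) : Prop :=
  exists Q P' mr mp, polar_wh_with h Q P' mr mp.

Definition polar_pos_wh (h : mcoef C n) : Prop :=
  exists Q P' mr mp, polar_wh_with h Q P' mr mp /\ 0 < mp.

Definition strongly_ppwh (P : 'I_n -> nat) (h : mcoef C n) : Prop :=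
  exists mr mp, polar_wh_with h P P mr mp /\ 0 < mp.

Variable R : realType.

Definition ppwh_face_type (c : mcoef C n) : Prop :=
  forall P, weight P -> affdim_eq (Delta R c P) n.-1 ->
    polar_pos_wh (face_fun R c P).

Definition sppwh_face_type (c : mcoef C n) : Prop :=
  forall P, weight P -> affdim_eq (Delta R c P) n.-1 ->
    strongly_ppwh P (face_fun R c P).

End Homog.

(* Main.v *)
Require Import Defs.
From HB Require Import structures.
From mathcomp Require Import all_boot all_order all_algebra.
From mathcomp Require Import all_classical all_reals all_analysis.
From mathcomp Require Import ring lra zify.
Import Order.TTheory GRing.Theory Num.Theory.
Local Open Scope ring_scope.

Section Gen.
Variable R : realType.

Lemma seq_min (T : eqType) (s : seq T) (f : T -> R) (P : T -> Prop) :
  (exists x, x \in s /\ P x) ->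
  exists x, [/\ x \in s, P x & forall y, y \in s -> P y -> f x <= f y].
Proof.
elim: s => [[x [] //]|a s IH] [x [xin Px]].
case: (pselect (exists x, x \in s /\ P x)) => [/IH [m [ms Pm mmin]]|nex].
  case: (pselect (P a)) => Pa.
    case: (leP (f a) (f m)) => h.
      exists a; split; [by rewrite inE eqxx|by []|].
      move=> y; rewrite inE => /orP [/eqP -> //|ys Py].
      exact: le_trans h (mmin _ ys Py).
    exists m; split => //; first by rewrite inE ms orbT.
    move=> y; rewrite inE => /orP [/eqP -> _|ys Py]; first exact: ltW.
    exact: mmin.
  exists m; split => //; first by rewrite inE ms orbT.
  move=> y; rewrite inE => /orP [/eqP -> Pa'|ys Py]; [by [] | exact: mmin].
have xa : x = a.
  move: xin; rewrite inE => /orP [/eqP //|xs]; by case: nex; exists x.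
subst x; exists a; split; [by rewrite inE eqxx|by []|].
move=> y; rewrite inE => /orP [/eqP -> //|ys Py]; by case: nex; exists y.
Qed.

End Gen.

Section Main.
Variables (R : realType) (C : numClosedFieldType) (n' : nat) (c : mcoef C n'.+1).
Local Notation n := n'.+1.
Local Notation rv := 'rV[R]_n.

Definition minW (W : rv) nu mu := c nu mu != 0 /\
  forall nu' mu', c nu' mu' != 0 -> dotr W (mpt nu mu) <= dotr W (mpt nu' mu').

Lemma pair_min (P : mindex n -> mindex n -> Prop) (f : mindex n -> mindex n -> R)
  (K : nat) nu0 mu0 :
  P nu0 mu0 ->
  (forall nu mu, P nu mu -> f nu mu <= f nu0 mu0 ->
     forall j, (nu j <= K)%N /\ (mu j <= K)%N) ->
  exists nu mu, P nu mu /\ forall nu' mu', P nu' mu' -> f nu mu <= f nu' mu'.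
Proof.
move=> P0 hb.
pose T : finType := ({ffun 'I_n -> 'I_K.+1} * {ffun 'I_n -> 'I_K.+1})%type.
pose cv (g : T) : mindex n * mindex n :=
  ((fun j => nat_of_ord (g.1 j)), (fun j => nat_of_ord (g.2 j))).
have conv : forall nu mu, (forall j, (nu j <= K)%N /\ (mu j <= K)%N) ->
    exists g : T, cv g = (nu, mu).
  move=> nu mu h; exists ([ffun j => inord (nu j)], [ffun j => inord (mu j)]).
  rewrite /cv /=; congr pair; apply: funext => j; rewrite ffunE inordK // ltnS;
    by case: (h j).
have [g0 eg0] := conv nu0 mu0 (hb _ _ P0 (le_refl _)).
have ex0 : exists g, g \in enum T /\ 
    (P (cv g).1 (cv g).2 /\ f (cv g).1 (cv g).2 <= f nu0 mu0).
  by exists g0; rewrite mem_enum eg0.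
have [g [_ [Pg fg] gmin]] := @seq_min R _ _ (fun g => f (cv g).1 (cv g).2) _ ex0.
exists (cv g).1, (cv g).2; split => // nu mu Pnm.
case: (leP (f nu mu) (f nu0 mu0)) => h.
  have [g' eg'] := conv nu mu (hb _ _ Pnm h).
  by have := gmin g' (mem_enum _ _); rewrite eg' /=; apply.
exact: le_trans fg (ltW h).
Qed.

Lemma dotrDr (a x y : rv) : dotr a (x + y) = dotr a x + dotr a y.
Proof. by rewrite /dotr -big_split /=; apply: eq_bigr => j _; rewrite mxE mulrDr. Qed.

Lemma dotrZr (a x : rv) k : dotr a (k *: x) = k * dotr a x.
Proof.
by rewrite /dotr mulr_sumr; apply: eq_bigr => j _; rewrite mxE mulrCA.
Qed.

Lemma dotrDl (a b x : rv) : dotr (a + b) x = dotr a x + dotr b x.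
Proof. by rewrite /dotr -big_split /=; apply: eq_bigr => j _; rewrite mxE mulrDl. Qed.

Lemma dotrZl (a x : rv) k : dotr (k *: a) x = k * dotr a x.
Proof.
by rewrite /dotr mulr_sumr; apply: eq_bigr => j _; rewrite mxE mulrA.
Qed.

Lemma dotrNl (a x : rv) : dotr (- a) x = - dotr a x.
Proof. by rewrite -scaleN1r dotrZl mulN1r. Qed.

Lemma dotrNr (a x : rv) : dotr a (- x) = - dotr a x.
Proof. by rewrite -scaleN1r dotrZr mulN1r. Qed.

Lemma dotrBl (a b x : rv) : dotr (a - b) x = dotr a x - dotr b x.
Proof. by rewrite dotrDl dotrNl. Qed.

Lemma dotrBr (a x y : rv) : dotr a (x - y) = dotr a x - dotr a y.
Proof. by rewrite dotrDr dotrNr. Qed.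

Lemma dotr_sumr (a : rv) k (l : 'I_k -> R) (y : 'I_k -> rv) :
  dotr a (\sum_(i < k) l i *: y i) = \sum_(i < k) l i * dotr a (y i).
Proof.
rewrite /dotr; under eq_bigr => j _ do rewrite summxE mulr_sumr.
rewrite exchange_big /=; apply: eq_bigr => i _; rewrite mulr_sumr.
by apply: eq_bigr => j _; rewrite mxE mulrCA.
Qed.

Lemma dotr_le (a x y : rv) : (forall j, 0 <= a 0 j) ->
  (forall j, x 0 j <= y 0 j) -> dotr a x <= dotr a y.
Proof. move=> a0 xy; apply: ler_sum => j _; have h := ler_wpM2l (a0 j) (xy j); exact h. Qed.

Lemma dotr_mx (a x : rv) : dotr a x = (x *m a^T) 0 0.
Proof. by rewrite /dotr mxE; apply: eq_bigr => j _; rewrite mxE mulrC. Qed.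

Lemma mpt_ge0 nu mu j : 0 <= (mpt nu mu : rv) 0 j.
Proof. by rewrite /mpt mxE. Qed.

Lemma gammaLB (V : rv) eta : (forall j, 0 <= V 0 j) -> newton_poly R c eta ->
  exists nu mu, c nu mu != 0 /\ dotr V (mpt nu mu) <= dotr V eta.
Proof.
move=> V0 [k [y [l [Sy [l0 [l1 ->]]]]]].
have k0 : (0 < k)%N.
  case: k y l Sy l0 l1 => // y l _ _; rewrite big_ord0 => /eqP; by rewrite eq_sym oner_eq0.
have [i [_ _ imin]] := @seq_min R _ (enum 'I_k) (fun i => dotr V (y i)) (fun _ => True)
  (ex_intro _ (Ordinal k0) (conj (mem_enum _ _) I)).
have [nu [mu [cnz hle]]] := Sy i.
exists nu, mu; split => //.
rewrite dotr_sumr; apply: le_trans (_ : dotr V (y i) <= _); first exact: dotr_le.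
have -> : dotr V (y i) = \sum_(i0 < k) l i0 * dotr V (y i) by rewrite -big_distrl /= l1 mul1r.
by apply: ler_sum => i0 _; have h := ler_wpM2l (l0 i0) (imin i0 (mem_enum _ _) I); exact h.
Qed.

Lemma mpt_gamma nu mu : c nu mu != 0 -> newton_poly R c (mpt nu mu : rv).
Proof.
move=> cnz; rewrite /newton_poly /convex_hull /=.
exists 1%N, (fun _ => mpt nu mu), (fun _ => 1); split.
  by move=> _; exists nu, mu; split.
split; first by move=> _; exact: ler01.
by rewrite !big_ord1 scale1r.
Qed.

Lemma wvec_ge0 P j : 0 <= (wvec R P : rv) 0 j.
Proof. by rewrite mxE. Qed.

Lemma delta_iff P nu mu : c nu mu != 0 ->
  (Delta R c P (mpt nu mu) <-> minW (wvec R P) nu mu).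
Proof.
move=> cnz; split.
  by move=> [_ h]; split => // nu' mu' c'; apply: h; apply: mpt_gamma.
move=> [_ h]; split; first exact: mpt_gamma.
move=> eta /(@gammaLB _ eta (wvec_ge0 P)) [nu' [mu' [c' le']]].
exact: le_trans (h _ _ c') le'.
Qed.


Definition posW (W : rv) := forall j, 0 < W 0 j.

Lemma term_le_dotr (a x : rv) j : (forall j, 0 <= a 0 j) -> (forall j, 0 <= x 0 j) ->
  a 0 j * x 0 j <= dotr a x.
Proof.
move=> a0 x0; rewrite /dotr (bigD1 j) //= lerDl.
by apply: sumr_ge0 => i _; apply: mulr_ge0.
Qed.

Lemma dotrBZ (W D x : rv) t : dotr (W - t *: D) x = dotr W x - t * dotr D x.
Proof. by rewrite dotrBl dotrZl. Qed.

Lemma minW_eq W nu mu nu' mu' : minW W nu mu -> minW W nu' mu' ->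
  dotr W (mpt nu mu) = dotr W (mpt nu' mu').
Proof.
move=> [c1 h1] [c2 h2]; apply/eqP; rewrite eq_le h1 // h2 //.
Qed.

Hypothesis c00 : c (fun _ => 0%N) (fun _ => 0%N) = 0.
Hypothesis axis : forall j : 'I_n, exists xi : rv,
  newton_poly R c xi /\ forall i, i != j -> xi 0 i = 0.

Lemma dpos W nu mu : posW W -> c nu mu != 0 -> 0 < dotr W (mpt nu mu).
Proof.
move=> Wp cnz.
case: (pselect (exists j, (0 < nu j + mu j)%N)) => [[j hj]|nj].
  apply: (lt_le_trans _ (term_le_dotr W (mpt nu mu) j (fun j => ltW (Wp j)) (@mpt_ge0 _ _))).
  by apply: mulr_gt0 => //; rewrite /mpt mxE ltr0n.
have h : forall j, (nu j = 0 /\ mu j = 0)%N.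
  move=> j; case: (posnP (nu j + mu j)) => [|hj]; last by case: nj; exists j.
  by move/eqP; rewrite addn_eq0 => /andP [/eqP -> /eqP ->].
have enu : nu = (fun _ => 0%N) by apply: funext => j; case: (h j).
have emu : mu = (fun _ => 0%N) by apply: funext => j; case: (h j).
by move: cnz; rewrite enu emu c00 eqxx.
Qed.

Lemma cross W D nu0 mu0 : posW W -> minW W nu0 mu0 ->
  (forall nu mu, minW W nu mu -> dotr D (mpt nu mu) = 0) ->
  (exists j, 0 < D 0 j) ->
  exists t, [/\ 0 < t, posW (W - t *: D),
    (forall nu mu, minW W nu mu -> minW (W - t *: D) nu mu) &
    exists nu mu, minW (W - t *: D) nu mu /\ dotr D (mpt nu mu) != 0].
Proof.
move=> Wp m0 Dperp [jj Djj].
set d := dotr W (mpt nu0 mu0).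
have dp : 0 < d by apply: dpos => //; case: m0.
have [j0 [_ Dj0 j0min]] := @seq_min R _ (enum 'I_n) (fun j => W 0 j / D 0 j)
  (fun j => 0 < D 0 j) (ex_intro _ jj (conj (mem_enum _ _) Djj)).
set tp := W 0 j0 / D 0 j0.
have tpp : 0 < tp by apply: divr_gt0.
have tpmin : forall j, 0 < D 0 j -> tp * D 0 j <= W 0 j.
  move=> j Dj; rewrite -ler_pdivlMr //; exact: j0min (mem_enum _ _) Dj.
have posl : forall t, 0 <= t -> t < tp -> posW (W - t *: D).
  move=> t t0 ttp j; rewrite !mxE.
  case: (ltP 0 (D 0 j)) => Dj.
    have := tpmin j Dj; have := Wp j; nra.
  have := Wp j; nra.
set V0 := W - tp *: D.
have V0ge : forall j, 0 <= V0 0 j.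
  move=> j; rewrite !mxE; case: (ltP 0 (D 0 j)) => Dj.
    have := tpmin j Dj; nra.
  have := Wp j; nra.
have V0j0 : V0 0 j0 = 0.
  by rewrite !mxE /tp -mulrA mulVf ?mulr1 ?subrr // gt_eqF.
have [xi [xig xiax]] := axis j0.
have V0xi : dotr V0 xi = 0.
  apply: big1 => j _; case: (eqVneq j j0) => [->|ne]; first by rewrite V0j0 mul0r.
  by rewrite xiax // mulr0.
have [nu1 [mu1 [c1 le1]]] := gammaLB V0 xi V0ge xig.
rewrite V0xi /V0 dotrBZ in le1.
have Wb1 : d <= dotr W (mpt nu1 mu1) by case: m0 => _ h; apply: h.
have Db1 : 0 < dotr D (mpt nu1 mu1) by nra.
pose tau nu mu := (dotr W (mpt nu mu) - d) / dotr D (mpt nu mu).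
set t1 := tau nu1 mu1.
have t1lt : t1 < tp by rewrite /t1 /tau ltr_pdivrMr //; nra.
have t1ge : 0 <= t1 by rewrite /t1 /tau divr_ge0 // ?subr_ge0 // ltW.
set V1 := W - t1 *: D.
have V1p := posl t1 t1ge t1lt.
pose K := (\max_(j < n) Num.Def.archi_bound (d / V1 0 j)%R)%N.
have hb : forall nu mu, c nu mu != 0 /\ 0 < dotr D (mpt nu mu) ->
    tau nu mu <= tau nu1 mu1 -> forall j, (nu j <= K)%N /\ (mu j <= K)%N.
  move=> nu mu [cnz Dp] le j.
  have : dotr V1 (mpt nu mu) <= d.
    move: le; rewrite -/t1 /tau ler_pdivrMr // /V1 dotrBZ; nra.
  move=> le2.
  have V1j := V1p j.
  have := term_le_dotr V1 (mpt nu mu) j (fun j => ltW (V1p j)) (@mpt_ge0 _ _).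
  have e : (mpt nu mu : rv) 0 j = (nu j + mu j)%N%:R by rewrite mxE.
  rewrite e => le3.
  have le4 : ((nu j + mu j)%N%:R : R) <= d / V1 0 j.
    rewrite ler_pdivlMr //; rewrite mulrC; exact: le_trans le3 le2.
  have le5 := archi_boundP (ltW (divr_gt0 dp V1j)).
  have le6 : (nu j + mu j < Num.Def.archi_bound (d / V1 0 j)%R)%N.
    by rewrite -(ltr_nat R); apply: le_lt_trans le4 le5.
  have le7 := @leq_bigmax _ (fun j => Num.Def.archi_bound (d / V1 0 j)%R) j.
  have le8 : (nu j + mu j <= K)%N by apply: leq_trans (ltnW le6) le7.
  by split; apply: leq_trans le8; [apply: leq_addr|apply: leq_addl].
have [nus [mus [[cs Ds] smin]]] := pair_min _ tau K nu1 mu1 (conj c1 Db1) hb.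
set t := tau nus mus.
have tle : t <= t1 := smin nu1 mu1 (conj c1 Db1).
have Wbs : d <= dotr W (mpt nus mus) by case: m0 => _ h; apply: h.
have t0 : 0 <= t by rewrite /t /tau divr_ge0 // ?subr_ge0 // ltW.
have tD : t * dotr D (mpt nus mus) = dotr W (mpt nus mus) - d.
  by rewrite /t /tau divfK // gt_eqF.
have tp0 : 0 < t.
  rewrite lt_neqAle t0 andbT; apply/negP => /eqP t0'.
  have ed : dotr W (mpt nus mus) = d by move: tD; rewrite -t0' mul0r => /eqP; rewrite eq_sym subr_eq0 => /eqP.
  have ms : minW W nus mus.
    by split => // nu' mu' c'; rewrite ed; case: m0 => _ h; apply: h.
  by move: Ds; rewrite (Dperp _ _ ms) ltxx.
have W'p := posl t t0 (le_lt_trans tle t1lt).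
have geb : forall nu mu, c nu mu != 0 -> d <= dotr (W - t *: D) (mpt nu mu).
  move=> nu mu cnz; rewrite dotrBZ.
  have Wb : d <= dotr W (mpt nu mu) by case: m0 => _ h; apply: h.
  case: (ltP 0 (dotr D (mpt nu mu))) => Db.
    have := smin nu mu (conj cnz Db); rewrite {2}/tau ler_pdivlMr // => h; rewrite -/t in h; lra.
  nra.
have eqm : forall nu mu, minW W nu mu -> dotr (W - t *: D) (mpt nu mu) = d.
  move=> nu mu ma; rewrite dotrBZ (Dperp _ _ ma) mulr0 subr0.
  exact: minW_eq ma m0.
exists t; split => //.
  move=> nu mu ma; split; first by case: ma.
  by move=> nu' mu' c'; rewrite (eqm _ _ ma); apply: geb.
exists nus, mus; split; last by rewrite gt_eqF.
split => // nu' mu' c'; apply: le_trans (geb _ _ c').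
by rewrite dotrBZ tD; lra.
Qed.


Lemma row_mul_dotr (Y : 'M[R]_(n, n)) (W : rv) i j :
  (Y *m W^T) i j = dotr W (row i Y).
Proof. by rewrite dotr_mx -row_mul [in RHS]mxE (ord1 j). Qed.

Lemma facet_dim Q (X : 'M[R]_n) : weight Q -> \rank X = n ->
  (forall i, exists nu mu, minW (wvec R Q) nu mu /\ row i X = mpt nu mu) ->
  affdim_eq (Delta R c Q) n.-1.
Proof.
move=> wQ rX hX.
have rowD : forall i, Delta R c Q (row i X).
  move=> i; have [nu [mu [[cnz mm] ->]]] := hX i.
  by apply/delta_iff.
split.
  pose x0 := row 0 X.
  pose Y : 'M[R]_(n', n) := \matrix_(i, j) (X (lift 0 i) j - X 0 j).
  have rY : forall i, row i Y = row (lift 0 i) X - x0.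
    by move=> i; apply/rowP => j; rewrite !mxE.
  exists x0, Y; split; first exact: rowD.
  split; first by move=> i; rewrite rY addrC subrK; apply: rowD.
  apply/eqP; rewrite eqn_leq rank_leq_row /=.
  have sub : (X <= x0 + Y)%MS.
    apply/row_subP => i; case: (unliftP 0 i) => [i'|] ->.
      have -> : row (lift 0 i') X = x0 + row i' Y by rewrite rY addrC subrK.
      by apply: addmx_sub; [apply: addsmxSl|apply: submx_trans (row_sub i' Y) (addsmxSr _ _)].
    exact: addsmxSl.
  have h1 := mxrankS sub.
  have h2 := (mxrank_adds_leqif x0 Y).1.
  have h3 := rank_leq_row x0.
  move: h1; rewrite rX => h1.
  have : (n <= 1 + \rank Y)%N by apply: leq_trans h1 (leq_trans h2 _); rewrite leq_add2r.
  by rewrite add1n ltnS.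
move=> [x0 [Y [Dx0 [DY rY]]]].
have Yu : Y \in unitmx by rewrite -row_free_unit /row_free rY.
have zero : forall i, dotr (wvec R Q) (row i Y) = 0.
  move=> i; have [g0 m0] := Dx0; have [g1 m1] := DY i.
  have := m0 _ g1; have := m1 _ g0; rewrite dotrDr => a b.
  lra.
have YW : Y *m (wvec R Q)^T = 0.
  by apply/matrixP => i j; rewrite row_mul_dotr zero mxE.
have : (wvec R Q)^T = 0 by rewrite -(mulKmx Yu (wvec R Q)^T) YW mulmx0.
move/matrixP => /(_ 0 0); rewrite !mxE => /eqP; rewrite pnatr_eq0 => /eqP Q0.
by move: (wQ 0); rewrite Q0.
Qed.


Lemma base (S : R -> Prop) (hS2 : forall l x, 0 < l -> S x -> S (l * x))
  W (X : 'M[R]_n) (u : rv) :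
  posW W -> \rank X = n ->
  (forall i, exists nu mu, minW W nu mu /\ row i X = mpt nu mu) ->
  S (dotr W u) ->
  exists Q : 'I_n -> nat, [/\ weight Q, affdim_eq (Delta R c Q) n.-1,
    (forall nu mu, minW W nu mu -> minW (wvec R Q) nu mu) &
    S (dotr (wvec R Q) u)].
Proof.
move=> Wp rX hX Su.
have hX' : forall i, exists p : mindex n * mindex n,
    minW W p.1 p.2 /\ row i X = mpt p.1 p.2.
  by move=> i; have [nu [mu h]] := hX i; exists (nu, mu).
have [f hf] := choice hX'.
pose Xz : 'M[int]_n := \matrix_(i, j) ((f i).1 j + (f i).2 j)%N%:Z.
have eX : X = map_mx intr Xz.
  apply/matrixP => i j; rewrite !mxE.
  have := congr1 (fun M : rv => M 0 j) (hf i).2; rewrite !mxE => ->.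
  by [].
pose d := dotr W (mpt (f 0).1 (f 0).2).
have dp : 0 < d by apply: dpos => //; case: (hf 0) => [[]].
have XW : X *m W^T = d *: const_mx 1.
  apply/matrixP => i j; rewrite row_mul_dotr (hf i).2 !mxE mulr1.
  exact: minW_eq (hf i).1 (hf 0).1.
have Xu : X \in unitmx by rewrite -row_free_unit /row_free rX.
have detX : \det X != 0 by move: Xu; rewrite unitmxE unitfE.
pose q : 'cV[int]_n := \adj Xz *m const_mx 1.
pose qR : 'cV[R]_n := map_mx intr q.
have XqR : X *m qR = \det X *: const_mx 1.
  rewrite /qR /q map_mxM map_const_mx rmorph1 map_mx_adj -eX mulmxA mul_mx_adj.
  by rewrite mul_scalar_mx.
pose lam := d / \det X.
have lam0 : lam != 0 by rewrite /lam mulf_neq0 ?invr_eq0 // gt_eqF.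
have WT : W^T = lam *: qR.
  rewrite -(mulKmx Xu W^T) XW -(mulKmx Xu (lam *: qR)) -(scalemxAr lam X qR) XqR.
  have e : lam * \det X = d by rewrite /lam divfK.
  by rewrite scalerA e.
have Wj : forall j, W 0 j = lam * (q j ord0)%:~R.
  by move=> j; have := congr1 (fun M : 'cV[R]_n => M j 0) WT; rewrite !mxE.
pose Q j := `|q j ord0|%N.
pose mu := `|lam|^-1.
have mup : 0 < mu by rewrite invr_gt0 normr_gt0.
have QW : forall j, (Q j)%:R = mu * W 0 j :> R.
  move=> j; rewrite /Q natr_absz intr_norm.
  rewrite -[W 0 j]ger0_norm ?ltW // Wj normrM /mu mulrA mulVf ?mul1r //.
  by rewrite normr_eq0.
have wQ : wvec R Q = mu *: W by apply/rowP => j; rewrite !mxE QW.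
have weQ : weight Q.
  by move=> j; rewrite -(ltr0n R) QW mulr_gt0.
have mm : forall nu mu', minW W nu mu' -> minW (wvec R Q) nu mu'.
  move=> nu mu' [cnz h]; split => // nu' mu'' c'.
  by rewrite wQ !dotrZl ler_pM2l //; apply: h.
exists Q; split => //.
  apply: (facet_dim Q X weQ rX) => i; have [nu [mu' [m e]]] := hX i.
  by exists nu, mu'; split => //; apply: mm.
by rewrite wQ dotrZl; apply: hS2.
Qed.


Lemma rank_ext {k} {X : 'M[R]_(k, n)} {v : rv} : \rank X = k -> ~~ (v <= X)%MS ->
  \rank (col_mx v X) = k.+1.
Proof.
move=> rX nvX; rewrite -addsmxE.
have v0 : v != 0 by apply: contraNneq nvX => ->; rewrite sub0mx.
have rv1 : \rank v = 1%N by rewrite rank_rV v0.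
have cap0 : (v :&: X)%MS = 0.
  case: (eqVneq (v :&: X)%MS 0) => // nz; exfalso.
  have r1 : (\rank (v :&: X)%MS <= 1)%N.
    by apply: leq_trans (mxrankS (capmxSl v X)) _; rewrite rv1.
  have r2 : \rank (v :&: X)%MS = 1%N.
    apply/eqP; rewrite eqn_leq r1 lt0n mxrank_eq0; exact: nz.
  have := (mxrank_leqif_eq (capmxSl v X)).2.
  rewrite r2 rv1 eqxx => /esym /andP [_ vc].
  by move: nvX; rewrite (submx_trans vc (capmxSr v X)).
by rewrite mxrank_disjoint_sum // rv1 rX.
Qed.

Lemma rows_ext {k} {X : 'M[R]_(k, n)} {v : rv} (Pr : rv -> Prop) :
  Pr v -> (forall i, Pr (row i X)) -> forall i, Pr (row i (col_mx v X)).
Proof.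
move=> Pv PX i; rewrite -(@splitK 1 k i); case: (@fintype.split 1 k i) => j /=.
  by rewrite rowKu (ord1 j) rowE; have -> : delta_mx 0 0 *m v = v by rewrite -rowE row_id.
by rewrite rowKd.
Qed.

Lemma kernel_vec k (X : 'M[R]_(k, n)) : (\rank X < n)%N ->
  exists D : rv, D != 0 /\ X *m D^T = 0.
Proof.
move=> rX.
have nz : kermx X^T != 0.
  rewrite -mxrank_eq0 mxrank_ker mxrank_tr; apply/eqP => h.
  by move: rX; rewrite -subn_gt0 h.
have [v vk v0] := rowV0Pn nz.
exists v; split => //.
move: vk; rewrite sub_kermx => /eqP h.
by rewrite -(trmxK (X *m v^T)) trmx_mul trmxK h trmx0.
Qed.

Lemma perp_sub {k} {X : 'M[R]_(k, n)} {D x : rv} : X *m D^T = 0 -> (x <= X)%MS ->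
  dotr D x = 0.
Proof.
move=> XD /submxP [w ->]; by rewrite dotr_mx -mulmxA XD mulmx0 mxE.
Qed.

Lemma perp_supp {W} {D u : rv} : (forall j, 0 <= D 0 j) ->
  (forall nu mu, minW W nu mu -> dotr D (mpt nu mu) = 0) ->
  (forall j, u 0 j != 0 -> exists nu mu, minW W nu mu /\ (mpt nu mu : rv) 0 j != 0) ->
  dotr D u = 0.
Proof.
move=> D0 Dp hu; apply: big1 => j _.
case: (eqVneq (u 0 j) 0) => [->|uj]; first by rewrite mulr0.
have [nu [mu [m mj]]] := hu j uj.
have h1 := term_le_dotr D (mpt nu mu) j D0 (@mpt_ge0 _ _).
rewrite (Dp _ _ m) in h1.
have h2 : 0 <= D 0 j * (mpt nu mu : rv) 0 j by apply: mulr_ge0 => //; apply: mpt_ge0.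
have : D 0 j * (mpt nu mu : rv) 0 j = 0 by apply/eqP; rewrite eq_le h1 h2.
by move/eqP; rewrite mulf_eq0 (negbTE mj) orbF => /eqP ->; rewrite mul0r.
Qed.


Definition suppW W (u : rv) := forall j, u 0 j != 0 ->
  exists nu mu, minW W nu mu /\ (mpt nu mu : rv) 0 j != 0.

Definition rowsW W {k} (X : 'M[R]_(k, n)) := forall i,
  exists nu mu, minW W nu mu /\ row i X = mpt nu mu.

Lemma key (S : R -> Prop)
  (hS1 : forall a b y z, 0 < a -> 0 < b -> S (a * y + b * z) -> S y \/ S z)
  (hS2 : forall l x, 0 < l -> S x -> S (l * x)) :
  forall m k (X : 'M[R]_(k, n)) W u, (n - k <= m)%N -> (0 < k)%N -> posW W -> \rank X = k ->
  rowsW W X -> suppW W u -> S (dotr W u) ->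
  exists Q : 'I_n -> nat, [/\ weight Q, affdim_eq (Delta R c Q) n.-1,
    (forall nu mu, minW W nu mu -> minW (wvec R Q) nu mu) &
    S (dotr (wvec R Q) u)].
Proof.
elim => [|m IH] k X W u hm k0 Wp rX hX hu Su.
  have ek : k = n.
    apply/eqP; rewrite eqn_leq; rewrite -rX rank_leq_col /= rX.
    by rewrite -subn_eq0 -leqn0.
  subst k; exact: (@base S hS2 W X u Wp rX hX Su).
case: (ltnP k n) => kn; last first.
  have ek : k = n by apply/eqP; rewrite eqn_leq kn -rX rank_leq_col.
  subst k; exact: (@base S hS2 W X u Wp rX hX Su).
have cont : forall (D : rv) W', X *m D^T = 0 -> posW W' ->
    (forall nu mu, minW W nu mu -> minW W' nu mu) ->
    (exists nu mu, minW W' nu mu /\ dotr D (mpt nu mu) != 0) ->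
    S (dotr W' u) ->
    exists Q : 'I_n -> nat, [/\ weight Q, affdim_eq (Delta R c Q) n.-1,
      (forall nu mu, minW W nu mu -> minW (wvec R Q) nu mu) &
      S (dotr (wvec R Q) u)].
  move=> D W' XD W'p sub [nu [mu [mb Db]]] Su'.
  have nvX : ~~ (mpt nu mu <= X)%MS.
    by apply/negP => h; move: Db; rewrite (perp_sub XD h) eqxx.
  have hm' : (n - k.+1 <= m)%N by lia.
  have hX' : rowsW W' (col_mx (mpt nu mu) X).
    apply: (rows_ext (fun r => exists nu mu, minW W' nu mu /\ r = mpt nu mu)).
      by exists nu, mu.
    move=> i; have [nu1 [mu1 [m1 e1]]] := hX i.
    by exists nu1, mu1; split => //; apply: sub.
  have hu' : suppW W' u.
    move=> j uj; have [nu1 [mu1 [m1 e1]]] := hu j uj.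
    by exists nu1, mu1; split => //; apply: sub.
  have [Q [wQ fQ sQ SQ]] := IH k.+1 (col_mx (mpt nu mu) X) W' u hm' (ltn0Sn _)
    W'p (rank_ext rX nvX) hX' hu' Su'.
  by exists Q; split => // nu1 mu1 m1; apply: sQ; apply: sub.
case: (pselect (exists nu mu, minW W nu mu /\ ~~ (mpt nu mu <= X)%MS)).
  move=> [nu [mu [mb nvX]]].
  have hm' : (n - k.+1 <= m)%N by lia.
  have hX' : rowsW W (col_mx (mpt nu mu) X).
    apply: (rows_ext (fun r => exists nu mu, minW W nu mu /\ r = mpt nu mu)).
      by exists nu, mu.
    exact: hX.
  exact: IH k.+1 (col_mx (mpt nu mu) X) W u hm' (ltn0Sn _) Wp (rank_ext rX nvX) hX' hu Su.
move=> nex.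
have allin : forall nu mu, minW W nu mu -> (mpt nu mu <= X)%MS.
  by move=> nu mu mb; apply/negPn/negP => h; apply: nex; exists nu, mu.
have rk : (\rank X < n)%N by rewrite rX.
have [D [D0 XD]] := @kernel_vec k X rk.
have Dperp : forall nu mu, minW W nu mu -> dotr D (mpt nu mu) = 0.
  by move=> nu mu mb; apply: perp_sub XD (allin _ _ mb).
have XD' : X *m (- D)^T = 0 by rewrite linearN /= mulmxN XD oppr0.
have Dperp' : forall nu mu, minW W nu mu -> dotr (- D) (mpt nu mu) = 0.
  by move=> nu mu mb; rewrite dotrNl Dperp // oppr0.
have [nu0 [mu0 [m0 _]]] := hX (Ordinal k0).
have [hp|hp] := pselect (exists j, 0 < D 0 j);
  have [hn|hn] := pselect (exists j, D 0 j < 0).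
- have hp' : exists j, 0 < (- D) 0 j.
    by have [j hj] := hn; exists j; rewrite mxE oppr_gt0.
  have [t [t0 W1p sub1 ex1]] := @cross W D nu0 mu0 Wp m0 Dperp hp.
  have [s [s0 W2p sub2 ex2]] := @cross W (- D) nu0 mu0 Wp m0 Dperp' hp'.
  have st : s + t != 0 by rewrite gt_eqF // addr_gt0.
  have e : dotr W u = s / (s + t) * dotr (W - t *: D) u +
                      t / (s + t) * dotr (W - s *: - D) u.
    rewrite !dotrBZ dotrNl; field; exact: st.
  rewrite e in Su.
  case: (hS1 _ _ _ _ (divr_gt0 s0 (addr_gt0 s0 t0)) (divr_gt0 t0 (addr_gt0 s0 t0)) Su)
    => [S1|S2].
    exact: (cont D _ XD W1p sub1 ex1 S1).
  exact: (cont (- D) _ XD' W2p sub2 ex2 S2).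
- have D0' : forall j, 0 <= D 0 j.
    by move=> j; rewrite leNgt; apply/negP => h; apply: hn; exists j.
  have Du : dotr D u = 0 := perp_supp D0' Dperp hu.
  have [t [t0 W1p sub1 ex1]] := @cross W D nu0 mu0 Wp m0 Dperp hp.
  apply: (cont D _ XD W1p sub1 ex1).
  by rewrite dotrBZ Du mulr0 subr0.
- have D0' : forall j, 0 <= (- D) 0 j.
    move=> j; rewrite mxE oppr_ge0 leNgt; apply/negP => h; apply: hp; exists j.
    exact: h.
  have Du : dotr (- D) u = 0 := perp_supp D0' Dperp' hu.
  have hp' : exists j, 0 < (- D) 0 j.
    by have [j hj] := hn; exists j; rewrite mxE oppr_gt0.
  have [s [s0 W2p sub2 ex2]] := @cross W (- D) nu0 mu0 Wp m0 Dperp' hp'.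
  apply: (cont (- D) _ XD' W2p sub2 ex2).
  by rewrite dotrBZ Du mulr0 subr0.
- exfalso; move/eqP: D0; apply; apply/rowP => j; rewrite mxE.
  case: (ltgtP (D 0 j) 0) => // h.
    by case: hn; exists j.
  by case: hp; exists j.
Qed.

End Main.

Section Final.
Variables (R : realType) (C : numClosedFieldType) (n' : nat) (c : mcoef C n'.+1).
Local Notation n := n'.+1.
Local Notation rv := 'rV[R]_n.
Local Notation mW := (@minW R C n' c).
Local Notation pW := (@posW R n').
Hypothesis c00 : c (fun _ => 0%N) (fun _ => 0%N) = 0.
Hypothesis axis : forall j : 'I_n, exists xi : rv,
  newton_poly R c xi /\ forall i, i != j -> xi 0 i = 0.

Lemma face_nz P nu mu : face_fun R c P nu mu != 0 -> mW (wvec R P) nu mu.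
Proof.
rewrite /face_fun; case: (pselect (Delta R c P (mpt nu mu))) => h.
  by rewrite (asboolT h) => cnz; apply/(delta_iff _ _ _ _ _ _ _ cnz).
by rewrite (asboolF h) eqxx.
Qed.

Lemma face_eq P nu mu : mW (wvec R P) nu mu -> face_fun R c P nu mu = c nu mu.
Proof.
move=> m; have h : Delta R c P (mpt nu mu) by apply/(delta_iff _ _ _ _ _ _ _ m.1).
by rewrite /face_fun (asboolT h).
Qed.

Definition dvec (nu mu : mindex n) : rv := \row_j ((nu j)%:R - (mu j)%:R).

Lemma dot_intp P (nu mu : mindex n) :
  ((\sum_(j < n) (P j)%:Z * ((nu j)%:Z + (mu j)%:Z))%:~R : R) =
  dotr (wvec R P) (mpt nu mu).
Proof.
rewrite rmorph_sum; apply: eq_bigr => j _.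
by rewrite rmorphM rmorphD /= !mxE natrD.
Qed.

Lemma dot_intm P (nu mu : mindex n) :
  ((\sum_(j < n) (P j)%:Z * ((nu j)%:Z - (mu j)%:Z))%:~R : R) =
  dotr (wvec R P) (dvec nu mu).
Proof.
rewrite rmorph_sum; apply: eq_bigr => j _.
by rewrite rmorphM rmorphB /= !mxE.
Qed.

Lemma wpos P : weight P -> pW (wvec R P).
Proof. by move=> wP j; rewrite mxE ltr0n. Qed.

Lemma bounded_finite (A : set (mindex n * mindex n)) K :
  (forall p, A p -> forall j, (p.1 j <= K)%N /\ (p.2 j <= K)%N) -> finite_set A.
Proof.
move=> hA.
pose T : finType := ({ffun 'I_n -> 'I_K.+1} * {ffun 'I_n -> 'I_K.+1})%type.
pose cv (g : T) : mindex n * mindex n :=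
  ((fun j => nat_of_ord (g.1 j)), (fun j => nat_of_ord (g.2 j))).
apply: (sub_finite_set _ (finite_image cv (@finite_finset T [set: T]))).
move=> [nu mu] Ap; exists ([ffun j => inord (nu j)], [ffun j => inord (mu j)]) => //.
rewrite /cv /=; congr pair; apply: funext => j; rewrite ffunE inordK // ltnS;
  by case: (hA _ Ap j).
Qed.

Lemma face_poly P : weight P -> mpolynomial (face_fun R c P).
Proof.
move=> wP; rewrite /mpolynomial.
case: (pselect (exists nu mu, face_fun R c P nu mu != 0)); last first.
  move=> nex; apply: (sub_finite_set _ (finite_set0 _)) => p h; apply: nex.
  by exists p.1, p.2.
move=> [nu0 [mu0 /face_nz m0]].
pose d0 := (\sum_(j < n) P j * (nu0 j + mu0 j))%N.
apply: (bounded_finite _ d0) => [[nu mu]] /= /face_nz m j.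
have e : dotr (wvec R P) (mpt nu mu) = dotr (wvec R P) (mpt nu0 mu0) by exact: (@minW_eq R C n' c _ _ _ _ _ m m0).
have en : forall a b : mindex n, dotr (wvec R P) (mpt a b) =
    (\sum_(j < n) P j * (a j + b j))%N%:R.
  move=> a b; rewrite /dotr natr_sum; apply: eq_bigr => i _; by rewrite !mxE natrM.
rewrite !en in e; move/eqP: e; rewrite eqr_nat => /eqP e.
have le : (P j * (nu j + mu j) <= d0)%N.
  rewrite /d0 -e (bigD1 j) //=; exact: leq_addr.
have le2 : (nu j + mu j <= d0)%N.
  apply: leq_trans le; rewrite leq_pmull //; exact: wP.
by split; apply: leq_trans le2; [apply: leq_addr|apply: leq_addl].
Qed.


Local Notation sW := (@suppW R C n' c).

Lemma keyP (S : R -> Prop)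
  (hS1 : forall a b y z, 0 < a -> 0 < b -> S (a * y + b * z) -> S y \/ S z)
  (hS2 : forall l x, 0 < l -> S x -> S (l * x)) P nu0 mu0 (u : rv) :
  weight P -> mW (wvec R P) nu0 mu0 -> sW (wvec R P) u -> S (dotr (wvec R P) u) ->
  exists Q : 'I_n -> nat, [/\ weight Q, affdim_eq (Delta R c Q) n.-1,
    (forall nu mu, mW (wvec R P) nu mu -> mW (wvec R Q) nu mu) &
    S (dotr (wvec R Q) u)].
Proof.
move=> wP m0 hu Su.
have Wp := wpos _ wP.
have dp := @dpos R C n' c c00 _ _ _ Wp m0.1.
have mz : (mpt nu0 mu0 : rv) != 0.
  apply/negP => /eqP e; move: dp; rewrite e.
  have -> : dotr (wvec R P) (0 : rv) = 0 by rewrite -(scale0r (0 : rv)) dotrZr mul0r.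
  by rewrite ltxx.
have rX : \rank (mpt nu0 mu0 : rv) = 1%N by rewrite rank_rV mz.
apply: (@key R C n' c c00 axis S hS1 hS2 n 1 (mpt nu0 mu0) (wvec R P) u
  (leq_subr _ _) (ltn0Sn _) Wp rX _ hu Su).
by move=> i; exists nu0, mu0; split => //; rewrite row_id.
Qed.

Lemma hS1pos (a b y z : R) : 0 < a -> 0 < b -> 0 < a * y + b * z -> 0 < y \/ 0 < z.
Proof.
move=> a0 b0 h; case: (ltP 0 y) => hy; first by left.
case: (ltP 0 z) => hz; first by right.
exfalso; nra.
Qed.

Lemma hS1ge (a b y z : R) : 0 < a -> 0 < b -> 0 <= a * y + b * z -> 0 <= y \/ 0 <= z.
Proof.
move=> a0 b0 h; case: (leP 0 y) => hy; first by left.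
case: (leP 0 z) => hz; first by right.
exfalso; nra.
Qed.

Lemma hS2pos (l x : R) : 0 < l -> 0 < x -> 0 < l * x.
Proof. exact: mulr_gt0. Qed.

Lemma hS2ge (l x : R) : 0 < l -> 0 <= x -> 0 <= l * x.
Proof. by move=> l0 x0; apply: mulr_ge0 => //; apply: ltW. Qed.

Lemma part1 (hpp : ppwh_face_type R c) P : weight P -> polar_wh (face_fun R c P).
Proof.
move=> wP.
case: (pselect (exists nu mu, face_fun R c P nu mu != 0)); last first.
  move=> nex; exists (fun _ => 1%N), (fun _ => 1%N), 1, 1.
  split => //; split => //; split => //; split => //.
  by move=> nu mu h; exfalso; apply: nex; exists nu, mu.
move=> [nu0 [mu0 /face_nz m0]].
have su : sW (wvec R P) (mpt nu0 mu0) by move=> j hj; exists nu0, mu0.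
have Su : 0 < dotr (wvec R P) (mpt nu0 mu0) := @dpos R C n' c c00 _ _ _ (wpos _ wP) m0.1.
have [Q [wQ fQ sQ _]] := keyP (fun x => 0 < x) hS1pos hS2pos P nu0 mu0 _ wP m0 su Su.
have [Q' [P' [mr [mp [[hQ' [hP' [mr0 [mp0 hall]]]] _]]]]] := hpp Q wQ fQ.
exists Q', P', mr, mp; split => //; split => //; split => //; split => //.
move=> nu mu /face_nz m; apply: hall; rewrite face_eq; [exact: m.1|exact: sQ].
Qed.


Lemma dvec_zero (nu mu : mindex n) j : (mpt nu mu : rv) 0 j = 0 -> dvec nu mu 0 j = 0.
Proof.
rewrite !mxE => /eqP; rewrite pnatr_eq0 addn_eq0 => /andP [/eqP -> /eqP ->].
by rewrite subrr.
Qed.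

Lemma supp2 P nu mu nu0 mu0 (w : rv) : mW (wvec R P) nu mu -> mW (wvec R P) nu0 mu0 ->
  (forall j, (mpt nu mu : rv) 0 j = 0 -> (mpt nu0 mu0 : rv) 0 j = 0 -> w 0 j = 0) ->
  sW (wvec R P) w.
Proof.
move=> m m0 hw j wj.
case: (eqVneq ((mpt nu mu : rv) 0 j) 0) => h1; last by exists nu, mu.
case: (eqVneq ((mpt nu0 mu0 : rv) 0 j) 0) => h2; last by exists nu0, mu0.
by move: wj; rewrite hw // eqxx.
Qed.

Lemma part2 (hs : sppwh_face_type R c) P : weight P -> strongly_ppwh P (face_fun R c P).
Proof.
move=> wP.
case: (pselect (exists nu mu, face_fun R c P nu mu != 0)); last first.
  move=> nex; exists 1, 1; split => //.
  split => //; split => //; split => //; split => //.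
  by move=> nu mu h; exfalso; apply: nex; exists nu, mu.
move=> [nu0 [mu0 /face_nz m0]].
set mr := \sum_(j < n) (P j)%:Z * ((nu0 j)%:Z + (mu0 j)%:Z).
set mp := \sum_(j < n) (P j)%:Z * ((nu0 j)%:Z - (mu0 j)%:Z).
have Wp := wpos _ wP.
have fac : forall Q nu mu, weight Q -> affdim_eq (Delta R c Q) n.-1 ->
    (forall nu mu, mW (wvec R P) nu mu -> mW (wvec R Q) nu mu) ->
    mW (wvec R P) nu mu ->
    dotr (wvec R Q) (dvec nu mu) = dotr (wvec R Q) (dvec nu0 mu0) /\
    0 < dotr (wvec R Q) (dvec nu0 mu0).
  move=> Q nu mu wQ fQ sQ m.
  have [mr' [mp' [[_ [_ [_ [_ hall]]]] mpp]]] := hs Q wQ fQ.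
  have nz : forall a b, mW (wvec R P) a b -> face_fun R c Q a b != 0.
    by move=> a b ma; rewrite face_eq; [exact: ma.1|exact: sQ].
  have [_ e1] := hall _ _ (nz _ _ m).
  have [_ e2] := hall _ _ (nz _ _ m0).
  rewrite -!dot_intm e1 e2; split => //; by rewrite ltr0z.
have rad : forall nu mu, mW (wvec R P) nu mu ->
    \sum_(j < n) (P j)%:Z * ((nu j)%:Z + (mu j)%:Z) = mr.
  move=> nu mu m; apply: (@intr_inj R); rewrite !dot_intp.
  exact: (@minW_eq R C n' c _ _ _ _ _ m m0).
have pol : forall nu mu, mW (wvec R P) nu mu ->
    \sum_(j < n) (P j)%:Z * ((nu j)%:Z - (mu j)%:Z) = mp.
  move=> nu mu m.
  case: (eqVneq (\sum_(j < n) (P j)%:Z * ((nu j)%:Z - (mu j)%:Z)) mp) => // ne.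
  exfalso.
  set u := dvec nu mu - dvec nu0 mu0.
  have uE : forall j, u 0 j = dvec nu mu 0 j - dvec nu0 mu0 0 j.
    by move=> j; rewrite /u !mxE.
  have du : dotr (wvec R P) u != 0.
    rewrite dotrBr -!dot_intm subr_eq0; apply/negP => /eqP /intr_inj h.
    by move: ne; rewrite h eqxx.
  have zu : forall j, (mpt nu mu : rv) 0 j = 0 -> (mpt nu0 mu0 : rv) 0 j = 0 ->
      u 0 j = 0.
    by move=> j h1 h2; rewrite uE (dvec_zero _ _ _ h1) (dvec_zero _ _ _ h2) subrr.
  have contra : forall Q, weight Q -> affdim_eq (Delta R c Q) n.-1 ->
      (forall nu mu, mW (wvec R P) nu mu -> mW (wvec R Q) nu mu) ->
      dotr (wvec R Q) u = 0.
    move=> Q wQ fQ sQ; have [e _] := fac Q nu mu wQ fQ sQ m.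
    by rewrite dotrBr e subrr.
  case: (ltgtP (dotr (wvec R P) u) 0) => hu; last by move: du; rewrite hu eqxx.
    have su : sW (wvec R P) (- u).
      apply: (supp2 _ _ _ _ _ _ m m0) => j h1 h2; by rewrite mxE (zu _ h1 h2) oppr0.
    have Su : 0 < dotr (wvec R P) (- u) by rewrite dotrNr oppr_gt0.
    have [Q [wQ fQ sQ SQ]] :=
      keyP (fun x => 0 < x) hS1pos hS2pos P nu0 mu0 _ wP m0 su Su.
    by move: SQ; rewrite dotrNr contra // oppr0 ltxx.
  have su : sW (wvec R P) u by apply: (supp2 _ _ _ _ _ _ m m0) => j h1 h2; apply: zu.
  have [Q [wQ fQ sQ SQ]] :=
    keyP (fun x => 0 < x) hS1pos hS2pos P nu0 mu0 _ wP m0 su hu.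
  by move: SQ; rewrite contra // ltxx.
have mpp : 0 < mp.
  rewrite ltNge; apply/negP => mple0.
  set w := - dvec nu0 mu0.
  have su : sW (wvec R P) w.
    apply: (supp2 _ _ _ _ _ _ m0 m0) => j h1 _; by rewrite mxE (dvec_zero _ _ _ h1) oppr0.
  have Su : 0 <= dotr (wvec R P) w by rewrite dotrNr -dot_intm oppr_ge0 lerz0.
  have [Q [wQ fQ sQ SQ]] :=
    keyP (fun x => 0 <= x) hS1ge hS2ge P nu0 mu0 _ wP m0 su Su.
  have [_ pos] := fac Q nu0 mu0 wQ fQ sQ m0.
  by move: SQ; rewrite dotrNr oppr_ge0 leNgt pos.
have mr0 : mr != 0.
  apply/eqP => e.
  have := @dpos R C n' c c00 _ _ _ Wp m0.1.
  by rewrite -dot_intp -/mr e ltxx.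
exists mr, mp; split => //.
split => //; split => //; split => //; split; first by rewrite gt_eqF.
move=> nu mu /face_nz m; split; [exact: rad|exact: pol].
Qed.

End Final.

Theorem proposition5 (R : realType) (C : numClosedFieldType) (n : nat)
  (c : mcoef C n) :
  (0 < n)%N ->
  mconvergent c ->
  c (fun _ => 0%N) (fun _ => 0%N) = 0 ->
  convenient R c ->
  (ppwh_face_type R c ->
     forall P, weight P ->
       mpolynomial (face_fun R c P) /\ polar_wh (face_fun R c P)) /\
  (sppwh_face_type R c ->
     forall P, weight P ->
       mpolynomial (face_fun R c P) /\ strongly_ppwh P (face_fun R c P)).
Proof.
move: c; case: n => [|n'] c n0 _ c00 conv; first by [].
have axis : forall j : 'I_n'.+1, exists xi : 'rV[R]_n'.+1,
    newton_poly R c xi /\ forall i, i != j -> xi 0 i = 0.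
  move=> j; have [xi [[F [[a [b [_ eF]]] [_ Fx]]] ax]] := conv j.
  exists xi; split => //; rewrite eF in Fx; by case: Fx.
split => [hpp P wP|hs P wP]; split.
- exact: (face_poly R C n' c P wP).
- exact: (@part1 R C n' c c00 axis hpp P wP).
- exact: (face_poly R C n' c P wP).
- exact: (@part2 R C n' c c00 axis hs P wP).
Qed.
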